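(* Let $a_2,a_3$ be integers with $1<a_2<a_3$, $A=\{1,a_2,a_3\}$, and write $a_3=C_2a_2+C_1$ with $0\le C_1<a_2$. If $a_2-C_2\le C_1<a_2$, or if $C_1=0$, then the fundamental stride generator for $A$ is of order $0$.
   Context: For integers $n$ and $i\ge 0$, an integer $x$ has an $n$-generation of order $i$ if there are integers $c_1,c_2\ge 0$ with $x+ia_3=c_2a_2+c_1$ and $c_1+c_2\le n+i$. For integers $n$ and $p\ge0$, $SG(A,n,p)$ is a stride generator (of order $p$) if: (A) every integer $0\le x<a_3$ has an $n$-generation of some order $\le p$; (B) at least one integer $0\le x<a_3$ has no $n$-generation of order $<p$; (C) at least one integer $0\le y<a_3$ has no $(n-1)$-generation of any order $\le p+1$. A stride generator $SG(A,n,p)$ is the fundamental stride generator for $A$ if there is no stride generator $SG(A,n',p')$ with $n'>n$. *)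

(* Defs.v *)
From Stdlib Require Import ZArith Lia.
Open Scope Z_scope.

(* A = {1, a2, a3}; only a2 and a3 matter. *)

Definition has_generation (a2 a3 n x i : Z) : Prop :=
  exists c1 c2 : Z, 0 <= c1 /\ 0 <= c2 /\
    x + i * a3 = c2 * a2 + c1 /\ c1 + c2 <= n + i.

Definition stride_generator (a2 a3 n p : Z) : Prop :=
  0 <= p /\
  (* (A) *)
  (forall x, 0 <= x < a3 -> exists i, 0 <= i <= p /\ has_generation a2 a3 n x i) /\
  (* (B) *)
  (exists x, 0 <= x < a3 /\ forall i, 0 <= i < p -> ~ has_generation a2 a3 n x i) /\
  (* (C) *)
  (exists y, 0 <= y < a3 /\ forall i, 0 <= i <= p + 1 -> ~ has_generation a2 a3 (n - 1) y i).

Definition fundamental_stride_generator (a2 a3 n p : Z) : Prop :=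
  stride_generator a2 a3 n p /\
  ~ (exists n' p', n' > n /\ stride_generator a2 a3 n' p').

(* Main.v *)
Require Import Defs.
From Stdlib Require Import ZArith Lia.
Open Scope Z_scope.

Lemma lower_bound a2 q r c1 c2 : 1 < a2 -> 0 <= r < a2 -> 0 <= c1 -> 0 <= c2 ->
  c2 * a2 + c1 = q * a2 + r -> q + r <= c1 + c2.
Proof.
  intros.
  assert (c2 <= q).
  { destruct (Z_le_gt_dec c2 q); auto.
    assert (c2 * a2 >= (q+1) * a2) by nia. nia. }
  nia.
Qed.

Lemma all_gen a2 a3 C1 C2 x : 1 < a2 -> a3 = C2 * a2 + C1 -> 0 <= C1 < a2 -> 1 <= C2 ->
  0 <= x < a3 -> has_generation a2 a3 (C2 + a2 - 2) x 0.
Proof.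
  intros.
  pose proof (Z.div_mod x a2 ltac:(lia)).
  pose proof (Z.mod_pos_bound x a2 ltac:(lia)).
  set (q := x / a2) in *. set (r := x mod a2) in *.
  assert (0 <= q) by (apply Z.div_pos; lia).
  exists r, q. split; [lia|]. split; [lia|]. split; [lia|].
  assert (q <= C2).
  { destruct (Z_le_gt_dec q C2); auto. nia. }
  destruct (Z.eq_dec q C2); [subst q; nia | lia].
Qed.

Lemma gen_mono a2 a3 n m x i : n <= m -> has_generation a2 a3 n x i -> has_generation a2 a3 m x i.
Proof. intros H [c1 [c2 H2]]. exists c1, c2. lia. Qed.

Theorem lemma15 (a2 a3 C1 C2 : Z) :
  1 < a2 -> a2 < a3 ->
  a3 = C2 * a2 + C1 -> 0 <= C1 < a2 ->
  (a2 - C2 <= C1 < a2 \/ C1 = 0) ->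
  (exists n, fundamental_stride_generator a2 a3 n 0) /\
  (forall n p, fundamental_stride_generator a2 a3 n p -> p = 0).
Proof.
  intros H1 H2 H3 H4 H5.
  assert (HC2 : 1 <= C2) by nia.
  set (M := C2 + a2 - 2).
  assert (AG : forall x, 0 <= x < a3 -> has_generation a2 a3 M x 0)
    by (intros; eapply all_gen; eauto).
  assert (SG : stride_generator a2 a3 M 0).
  { split; [lia|]. split.
    { intros x Hx. exists 0. split; [lia|]. auto. }
    split.
    { exists 0. split; [lia|]. intros; lia. }
    exists (C2 * a2 - 1). split; [nia|].
    intros i Hi [c1 [c2 [Hc1 [Hc2 [E L]]]]].
    assert (i = 0 \/ i = 1) as [-> | ->] by lia.
    - assert (C2 - 1 + (a2 - 1) <= c1 + c2)
        by (apply (lower_bound a2 (C2-1) (a2-1) c1 c2); lia).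
      unfold M in L. lia.
    - destruct (Z.eq_dec C1 0) as [H5'|H5'].
      + subst C1.
        assert ((2*C2-1) + (a2 - 1) <= c1 + c2)
          by (apply (lower_bound a2 (2*C2-1) (a2-1) c1 c2); lia).
        unfold M in L. lia.
      + assert (2*C2 + (C1 - 1) <= c1 + c2)
          by (apply (lower_bound a2 (2*C2) (C1-1) c1 c2); lia).
        unfold M in L. lia. }
  split.
  - exists M. split; auto.
    intros [n' [p' [Hn [Hp0 [_ [_ [y [Hy Hno]]]]]]]].
    apply (Hno 0); [lia|]. apply (gen_mono _ _ M); [lia|]. auto.
  - intros n p [[Hp [_ [[x [Hx HB]] _]]] Hmax].
    assert (M <= n).
    { destruct (Z_le_gt_dec M n); auto. exfalso. apply Hmax. exists M, 0. split; auto; lia. }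
    destruct (Z.eq_dec p 0); auto. exfalso.
    apply (HB 0); [lia|]. apply (gen_mono _ _ M); auto.
Qed.
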